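(* For every integer $n\ge 2$ and every set $V$ of $n$ positive integers, there exists $v\in V$ such that $\kappa(V\setminus\{v\})\ge\frac1n$.
   Context: For $x\in\mathbb{R}$, $\|x\|=\min\{x-\lfloor x\rfloor,\lceil x\rceil-x\}$ denotes the distance from $x$ to the nearest integer. For a finite nonempty set $V$ of positive integers, $\kappa(V)=\sup_{t\in(0,1)}\min_{v\in V}\|tv\|$. *)

(* Defs.v *)
From HB Require Import structures.
From mathcomp Require Import all_boot all_order all_algebra.
From mathcomp Require Import finmap.
From mathcomp Require Import all_classical all_reals.
Set Implicit Arguments. Unset Strict Implicit. Unset Printing Implicit Defensive.
Import Order.TTheory GRing.Theory Num.Theory.
Local Open Scope ring_scope.
Local Open Scope classical_set_scope.

Definition dnint {R : realType} (x : R) : R :=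
  Num.min (x - (Num.floor x)%:~R) ((Num.ceil x)%:~R - x).

(* min_{v in V} ||t v||, for a finite set V of naturals.  The seed value 1 is
   irrelevant when V is nonempty, since ||.|| <= 1/2 < 1. *)
Definition minnorm {R : realType} (V : {fset nat}) (t : R) : R :=
  \big[Num.min/1]_(v <- V) dnint (t * v%:R).

Definition kappa {R : realType} (V : {fset nat}) : R :=
  sup [set x : R | exists t : R, 0 < t < 1 /\ x = minnorm V t].

(* Main.v *)
Require Import Defs.
From HB Require Import structures.
From mathcomp Require Import all_boot all_order all_algebra.
From mathcomp Require Import finmap.
From mathcomp Require Import all_classical all_reals.
From mathcomp Require Import zify ring lra.
Import Order.TTheory GRing.Theory Num.Theory.
Local Open Scope ring_scope.
Local Open Scope nat_scope.
Lemma count_ltk m k : count (fun i => i < k) (iota 0 m) = minn k m.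
Proof.
elim: m => [|m IH]; first by rewrite /= minn0.
rewrite -[m.+1]addn1 iotaD count_cat IH /= add0n addn0.
case: ltnP => H; lia.
Qed.

Lemma count_gtc m c : count (fun i => c < i) (iota 0 m) = m - minn m c.+1.
Proof.
elim: m => [|m IH]; first by [].
rewrite -[m.+1]addn1 iotaD count_cat IH /= add0n addn0.
case: ltnP => H; lia.
Qed.

Lemma count_period (g : pred nat) M k : (forall i, g (i + M) = g i) ->
  count g (iota 0 (k * M)) = k * count g (iota 0 M).
Proof.
move=> Hg; elim: k => [|k IH]; first by [].
rewrite mulSn iotaD count_cat add0n.
have -> : iota M (k * M) = map (addn M) (iota 0 (k * M)) by rewrite -iotaDl addn0.
rewrite count_map (eq_count (a2 := g)) ?IH // => i /=.
by rewrite /preim /= addnC Hg.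
Qed.

Definition badp (P N j v : nat) :=
  ~~ ((P <= (j * v) %% N) && ((j * v) %% N <= N - P)).

Lemma count_bad n Q v : 0 < v -> 0 < Q -> 2 <= n ->
  count (badp (Q * v) (n * Q * v) ^~ v) (iota 0 (n * Q * v)) <= 2 * (Q * v) - 1.
Proof.
move=> v0 Q0 n2; set M := n * Q.
have HM : Q <= M by rewrite /M; nia.
have -> : iota 0 (M * v) = iota 0 (v * M) by rewrite mulnC.
rewrite count_period; last first.
  by move=> i; rewrite /badp /= mulnDl modnDr.
rewrite (eq_in_count (a2 := predU (fun i => i < Q) (fun i => M - Q < i))); last first.
  move=> i; rewrite mem_iota add0n => /andP [_ iM] /=.
  rewrite /badp modn_small ?ltn_pmul2r // leq_pmul2r // -mulnBl leq_pmul2r //.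
  by rewrite negb_and -!ltnNge.
have := count_predUI (fun i => i < Q) (fun i => M - Q < i) (iota 0 M).
rewrite count_ltk count_gtc => H.
set c1 := count (predU _ _) _ in H *.
have H2 : c1 <= 2 * Q - 1 by lia.
have := leq_mul (leqnn v) H2; nia.
Qed.
Local Open Scope ring_scope.
Lemma dnint_ge (R : realType) (N P n a : nat) : N = (n * P)%N -> (0 < P)%N ->
  (P <= a %% N <= N - P)%N -> 1 / n%:R <= dnint (a%:R / N%:R : R).
Proof.
move=> hN P0 /andP [h1 h2].
have N0 : (0 < N)%N.
  case: (posnP N) => // N0'; move: h1 h2; rewrite N0' modn0; lia.
have n0 : (0 < n)%N by move: N0; rewrite hN muln_gt0 => /andP [].
set q := (a %/ N)%N; set r := (a %% N)%N.
have ha : a = (q * N + r)%N by rewrite /q /r -divn_eq.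
have rN : (r < N)%N by rewrite /r ltn_mod.
set x : R := a%:R / N%:R.
have Nr : 0 < N%:R :> R by rewrite ltr0n.
have hx : x * N%:R = q%:R * N%:R + r%:R.
  by rewrite /x mulfVK ?gt_eqF // ha natrD natrM.
have hn : 1 / n%:R = P%:R / N%:R :> R.
  rewrite hN natrM; field; rewrite !pnatr_eq0 -!lt0n P0 n0. by [].
have hrP : P%:R <= r%:R :> R by rewrite ler_nat.
have hrN : r%:R + P%:R <= N%:R :> R by rewrite -natrD ler_nat; lia.
have hrlt : r%:R + 1 <= N%:R :> R by rewrite -[1]/(1%:R) -natrD ler_nat addn1.
have P1 : 1 <= P%:R :> R by rewrite ler1n.
have fl : (Num.floor x <= q%:Z)%R.
  rewrite -ltzD1 floor_lt_int intrD -[(q%:Z)%:~R]/(q%:R).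
  rewrite -(ltr_pM2r Nr) hx mulrDl mul1r; lra.
have cl : ((q.+1)%:Z <= Num.ceil x)%R.
  rewrite intS addrC lezD1 ltNge ceil_le_int -ltNge.
  rewrite -(ltr_pM2r Nr) hx (_ : (q%:Z)%:~R = q%:R :> R) //; lra.
have fl' : (Num.floor x)%:~R <= q%:R :> R by rewrite -[q%:R]/(q%:Z%:~R) ler_int.
have cl' : (q.+1)%:R <= (Num.ceil x)%:~R :> R by rewrite -[_%:R]/((q.+1)%:Z%:~R) ler_int.
rewrite /dnint le_min hn !ler_pdivrMr //; apply/andP; split.
  rewrite mulrBl hx; nra.
rewrite -addn1 natrD in cl'; rewrite mulrBl hx; nra.
Qed.

Lemma count_sum (T : eqType) (a : pred T) (s : seq T) :
  count a s = (\sum_(x <- s) (a x : nat))%N.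
Proof. elim: s => [|x s IH]; by rewrite ?big_nil ?big_cons //= IH. Qed.

Lemma bigmin_le1 (R : realType) (s : seq nat) (F : nat -> R) :
  \big[Num.min/1]_(i <- s) F i <= 1.
Proof. elim: s => [|x s IH]; first by rewrite big_nil lexx. by rewrite big_cons ge_min IH orbT. Qed.

Lemma bigmin_ge (R : realType) (s : seq nat) (F : nat -> R) c :
  c <= 1 -> (forall i, i \in s -> c <= F i) -> c <= \big[Num.min/1]_(i <- s) F i.
Proof.
move=> c1; elim: s => [|x s IH] H; rewrite ?big_nil ?big_cons // le_min H ?mem_head //.
by rewrite IH // => i iS; apply: H; rewrite in_cons iS orbT.
Qed.

Theorem mainTheorem7 (R : realType) (n : nat) (V : {fset nat}) :
  (2 <= n)%N -> #|` V| = n -> (forall v, v \in V -> (0 < v)%N) ->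
  exists v, v \in V /\ 1 / n%:R <= kappa (R := R) (V `\ v)%fset.
Proof.
move=> n2 Vn Vpos.
set P := (\prod_(v <- V) v)%N.
have P0 : (0 < P)%N by rewrite /P big_seq; apply: prodn_cond_gt0.
have Pdvd : forall v, v \in V -> (v %| P)%N.
  by move=> v vV; rewrite /P (big_rem v) //= dvdn_mulr.
set N := (n * P)%N.
set S := iota 1 (N - 1).
have N1 : (1 <= N)%N by rewrite /N muln_gt0 P0 andbT; lia.
have hcount : forall v, v \in V -> (count (badp P N ^~ v) S <= 2 * P - 2)%N.
  move=> v vV; have v0 := Vpos v vV.
  have defP : P = (P %/ v * v)%N by rewrite divnK // Pdvd.
  have Q0 : (0 < P %/ v)%N by rewrite divn_gt0 // dvdn_leq // Pdvd.
  have := count_bad n (P %/ v) v v0 Q0 n2; rewrite -mulnA -defP -/N.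
  have -> : iota 0 N = 0%N :: S by rewrite /S -[N in iota 0 N](subnKC N1).
  rewrite /= /badp mul0n mod0n (_ : (P <= 0)%N = false) /=; [lia|lia].
have : has (fun j => count (fun v => badp P N j v) V <= 1)%N S.
  apply/negPn/negP => /hasPn H.
  have H1 : (\sum_(j <- S) 2 <= \sum_(j <- S) count (fun v => badp P N j v) V)%N.
    rewrite big_seq_cond [X in (_ <= X)%N]big_seq_cond; apply: leq_sum => j /andP [jS _].
    by have := H j jS; rewrite /= -ltnNge.
  have H2 : (\sum_(j <- S) count (fun v => badp P N j v) V
             <= \sum_(v <- V) (2 * P - 2))%N.
    under eq_bigr do rewrite count_sum.
    rewrite exchange_big /= big_seq_cond [X in (_ <= X)%N]big_seq_cond.
    apply: leq_sum => v /andP [vV _]; rewrite -count_sum; exact: hcount.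
  move: (leq_trans H1 H2); rewrite !big_const_seq !count_predT !iter_addn_0 Vn /S size_iota /N.
  nia.
move=> /hasP [j jS hj].
have [v vV Hv] : exists2 v, v \in V & forall w, w \in V -> w != v -> ~~ badp P N j w.
  case: (boolP (has (fun v => badp P N j v) V)) => [/hasP [v vV bv] | /hasPn hn].
    exists v => // w wV wv; apply/negP => bw.
    have : (2 <= count (fun v => badp P N j v) V)%N.
      rewrite (permP (perm_to_rem vV)) /= bv add1n ltnS -has_count.
      apply/hasP; exists w => //.
      by rewrite (mem_rem_uniq _ (fset_uniq V)) inE wv wV.
    lia.
  have : V != fset0 by rewrite -cardfs_gt0 Vn; lia.
  move=> /fset0Pn [v vV]; exists v => // w wV _; exact: hn w wV.
exists v; split => //.
have jS' := jS; rewrite mem_iota in jS'.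
rewrite /kappa.
have Hle : 1 / n%:R <= minnorm (V `\ v)%fset (j%:R / N%:R : R).
  rewrite /minnorm; apply: bigmin_ge.
    rewrite ler_pdivrMr ?mul1r ?ler1n ?ltr0n; lia.
  move=> w; rewrite in_fsetD1 => /andP [wv wV].
  rewrite mulrAC -natrM; apply: (@dnint_ge R N P n) => //.
  by have := Hv w wV wv; rewrite /badp negbK.
apply: (le_trans Hle); apply: ub_le_sup.
  exists 1 => y [t [_ ->]]; exact: bigmin_le1.
exists (j%:R / N%:R); split => //.
apply/andP; split.
  rewrite divr_gt0 // ltr0n; lia.
rewrite ltr_pdivrMr ?mul1r ?ltr_nat ?ltr0n; lia.
Qed.
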